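(* Let $\varphi$ be a concave Orlicz function satisfying $\lim_{t\to0^+}\sup_{u\in(0,1]}\varphi(tu)/\varphi(u)=0$. Then $\lambda_\varphi$ is lattice $1$-concave; indeed $\sum_{j=1}^J\lambda_\varphi(f_j)\le\lambda_\varphi(\sum_{j=1}^Jf_j)$ for every finite family $(f_j)_{j=1}^J$ in $[0,\infty]^{\mathbb{N}}$.
   Context: An Orlicz function is a non-null, left-continuous, non-decreasing $\varphi\colon[0,\infty)\to[0,\infty)$ with $\lim_{t\to0^+}\varphi(t)=0$; set $\varphi(\infty)=\infty$. For $f=(a_n)\in[0,\infty]^{\mathbb{N}}$, $\lambda_\varphi(f)=\inf\{t>0:\sum_{n=1}^\infty\varphi(a_n/t)\le1\}$; under the stated limit condition this is a function quasi-norm over $\mathbb{N}$ (counting measure). A function quasi-norm $\lambda$ over $\mathbb{N}$ is lattice $1$-concave if there is $C$ with $\sum_{j=1}^J\lambda(f_j)\le C\lambda(\sum_{j=1}^Jf_j)$ for all finite families of nonnegative sequences. *)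

(* Defs.v *)
From HB Require Import structures.
From mathcomp Require Import all_boot all_order all_algebra.
From mathcomp Require Import all_classical all_reals all_analysis.
Set Implicit Arguments. Unset Strict Implicit. Unset Printing Implicit Defensive.
Import Order.TTheory GRing.Theory Num.Theory.
Import numFieldNormedType.Exports.
Local Open Scope classical_set_scope.
Local Open Scope ring_scope.

(* An Orlicz function phi : [0,oo) -> [0,oo), represented by phi : R -> R whose
   values off [0,oo) are irrelevant. *)
Definition orlicz_function (R : realType) (phi : R -> R) : Prop :=
  [/\ (forall t, 0 <= t -> 0 <= phi t),
      (exists t, 0 <= t /\ phi t != 0),
      (forall t, 0 < t -> phi x @[x --> t^'-] --> phi t),
      (forall s t, 0 <= s -> s <= t -> phi s <= phi t)
    & phi x @[x --> 0^'+] --> 0].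

Definition concave_on_nonneg (R : realType) (phi : R -> R) : Prop :=
  forall x y s, 0 <= x -> 0 <= y -> 0 <= s -> s <= 1 ->
    s * phi x + (1 - s) * phi y <= phi (s * x + (1 - s) * y).

Definition sup_ratio_vanishes (R : realType) (phi : R -> R) : Prop :=
  forall eps : R, 0 < eps -> exists delta : R, 0 < delta /\
    forall t u, 0 < t -> t < delta -> 0 < u -> u <= 1 ->
      phi (t * u) / phi u <= eps.

Definition phibar (R : realType) (phi : R -> R) (x : \bar R) : \bar R :=
  match x with
  | EFin r => (phi r)%:E
  | _ => +oo%E
  end.

(* lambda_phi(f) = inf { t > 0 : sum_n phi(a_n / t) <= 1 }  (inf of empty set = +oo) *)
Definition lambda_phi (R : realType) (phi : R -> R) (f : nat -> \bar R) : \bar R :=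
  ereal_inf [set (t%:E)%E | t in [set t : R | 0 < t /\
     (\sum_(0 <= n <oo) phibar phi (f n * (t^-1)%:E) <= 1)%E]].

Definition lattice_1_concave (R : realType) (lam : (nat -> \bar R) -> \bar R) : Prop :=
  exists C : R, forall (J : nat) (f : nat -> nat -> \bar R),
    (forall j n, (0 <= f j n)%E) ->
    (\sum_(j < J) lam (f j) <= C%:E * lam (fun n => \sum_(j < J) f j n))%E.

(* Main.v *)
Require Import Defs.
From HB Require Import structures.
From mathcomp Require Import all_boot all_order all_algebra.
From mathcomp Require Import all_classical all_reals all_analysis.
From mathcomp Require Import ring lra.
Import Order.TTheory GRing.Theory Num.Theory.
Import numFieldNormedType.Exports.
Local Open Scope ring_scope.

Section S.
Variables (R : realType) (phi : R -> R).
Hypothesis phi0 : forall t, 0 <= t -> 0 <= phi t.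
Hypothesis phimono : forall s t, 0 <= s -> s <= t -> phi s <= phi t.
Hypothesis conc : concave_on_nonneg phi.

Local Open Scope ereal_scope.

Lemma lam_ge0 f : 0 <= lambda_phi phi f.
Proof.
apply: le_ereal_inf_tmp => _ [t [t0 _] <-]; rewrite lee_fin; exact: ltW.
Qed.

Lemma lam_le f (t : R) : (0 < t)%R ->
  \sum_(0 <= n <oo) phibar phi (f n * (t^-1)%:E) <= 1 -> lambda_phi phi f <= t%:E.
Proof. by move=> t0 H; apply: ereal_inf_lbound; exists t. Qed.

Lemma lam_gt f (t : R) : (0 < t)%R -> t%:E < lambda_phi phi f ->
  1 < \sum_(0 <= n <oo) phibar phi (f n * (t^-1)%:E).
Proof.
move=> t0 H; rewrite ltNge; apply/negP => H'.
by have := lam_le f t t0 H'; rewrite leNgt H.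
Qed.

Lemma phibar_ge0 x : 0 <= x -> 0 <= phibar phi x.
Proof. by case: x => [x||] //= x0; rewrite lee_fin phi0. Qed.

Lemma phibar_mono x y : 0 <= x -> x <= y -> phibar phi x <= phibar phi y.
Proof.
case: x => [x||] //=; case: y => [y||] //= x0 xy; rewrite ?leey // ?lee_fin.
by apply: phimono; rewrite -?lee_fin.
Qed.

Lemma sum_mono f g (t : R) : (0 < t)%R -> (forall n, 0 <= f n) -> (forall n, f n <= g n) ->
  \sum_(0 <= n <oo) phibar phi (f n * (t^-1)%:E) <=
  \sum_(0 <= n <oo) phibar phi (g n * (t^-1)%:E).
Proof.
move=> t0 f0 fg; have ti : 0 <= (t^-1)%:E by rewrite lee_fin invr_ge0 ltW.
apply: lee_nneseries.
  by move=> n _ _; apply: phibar_ge0; apply: mule_ge0.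
move=> n _; apply: phibar_mono; first by apply: mule_ge0.
exact: lee_wpmul2r.
Qed.


Lemma two f g : (forall n, 0 <= f n) -> (forall n, 0 <= g n) ->
  lambda_phi phi f + lambda_phi phi g <= lambda_phi phi (fun n => f n + g n).
Proof.
move=> f0 g0.
have fg0 n : 0 <= f n + g n by rewrite adde_ge0.
apply: le_ereal_inf_tmp => _ [T [T0 HT] <-].
have Hf : lambda_phi phi f <= T%:E.
  apply: lam_le => //; apply: le_trans HT; apply: sum_mono => // n; exact: leeDl.
have Hg : lambda_phi phi g <= T%:E.
  apply: lam_le => //; apply: le_trans HT; apply: sum_mono => // n; exact: leeDr.
have Fa := lam_gt f. have Fb := lam_gt g.
move: Hf Hg Fa Fb (lam_ge0 f) (lam_ge0 g).
case: (lambda_phi phi f) => [a||]; last 2 first.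
- by move=> H; rewrite leNgt ltry in H.
- by move=> _ _ _ _ H; rewrite leNgt ltNyr in H.
case: (lambda_phi phi g) => [b||]; last 2 first.
- by move=> _ H; rewrite leNgt ltry in H.
- by move=> _ _ _ _ _ H; rewrite leNgt ltNyr in H.
rewrite !lee_fin => Ha Hb Fa Fb a0 b0.
move: a0; rewrite le_eqVlt => /predU1P [<-|ap]; first by rewrite add0r.
move: b0; rewrite le_eqVlt => /predU1P [<-|bp]; first by rewrite addr0.
rewrite leNgt; apply/negP => abT.
have ab0 : (0 < a + b)%R by rewrite addr_gt0.
set t1 := (T * a / (a + b))%R.
set t2 := (T * b / (a + b))%R.
have t10 : (0 < t1)%R by rewrite /t1 divr_gt0 ?mulr_gt0.
have t20 : (0 < t2)%R by rewrite /t2 divr_gt0 ?mulr_gt0.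
have t1a : (t1 < a)%R by rewrite /t1 ltr_pdivrMr //; nra.
have t2b : (t2 < b)%R by rewrite /t2 ltr_pdivrMr //; nra.
have H1 := Fa t1 t10 (t1a : (t1%:E < a%:E)).
have H2 := Fb t2 t20 (t2b : (t2%:E < b%:E)).
set s := (a / (a + b))%R.
have s0 : (0 < s)%R by rewrite /s divr_gt0.
have s1 : (0 < 1 - s)%R by rewrite subr_gt0 /s ltr_pdivrMr //; lra.
have pt n : s%:E * phibar phi (f n * (t1^-1)%:E) + (1 - s)%:E * phibar phi (g n * (t2^-1)%:E)
    <= phibar phi ((f n + g n) * (T^-1)%:E).
  move: (f0 n) (g0 n); case: (f n) => [x||]; case: (g n) => [y||] // x0 y0.
  + rewrite -EFinD -!EFinM /= -EFinD lee_fin.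
    rewrite lee_fin in x0; rewrite lee_fin in y0.
    have -> : ((x + y) * T^-1 = s * (x * t1^-1) + (1 - s) * (y * t2^-1))%R.
      rewrite /s /t1 /t2; field.
      by rewrite !gt_eqF.
    apply: (conc (x / t1)%R (y / t2)%R s).
    - exact: divr_ge0 x0 (ltW t10).
    - exact: divr_ge0 y0 (ltW t20).
    - exact: ltW.
    - lra.
  all: rewrite ?addey ?addye // ?mulyr ?gtr0_sg ?invr_gt0 // ?mul1e /=.
  all: try by rewrite leey.
have e1 : s%:E + (1 - s)%:E = 1 by rewrite -EFinD addrC subrK.
have : 1 < s%:E * \sum_(0 <= n <oo) phibar phi (f n * (t1^-1)%:E)
         + (1 - s)%:E * \sum_(0 <= n <oo) phibar phi (g n * (t2^-1)%:E).
  rewrite -e1; apply: lteD; rewrite -[X in X < _]mule1 lte_pmul2l // lte_fin.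
have nf n : 0 <= phibar phi (f n * (t1^-1)%:E).
  by apply: phibar_ge0; apply: mule_ge0 => //; rewrite lee_fin invr_ge0 ltW.
have ng n : 0 <= phibar phi (g n * (t2^-1)%:E).
  by apply: phibar_ge0; apply: mule_ge0 => //; rewrite lee_fin invr_ge0 ltW.
have nfs n : 0 <= s%:E * phibar phi (f n * (t1^-1)%:E).
  by apply: mule_ge0 => //; rewrite lee_fin ltW.
have ngs n : 0 <= (1 - s)%:E * phibar phi (g n * (t2^-1)%:E).
  by apply: mule_ge0 => //; rewrite lee_fin ltW.
rewrite -!nneseriesZl // -nneseriesD // => H.
have L : \sum_(0 <= n <oo) (s%:E * phibar phi (f n * (t1^-1)%:E) +
      (1 - s)%:E * phibar phi (g n * (t2^-1)%:E)) <=
    \sum_(0 <= n <oo) phibar phi ((f n + g n) * (T^-1)%:E).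
  apply: lee_nneseries.
  - by move=> n _ _; rewrite adde_ge0.
  - by move=> n _; exact: pt.
by have := lt_le_trans H (le_trans L HT); rewrite ltxx.
Qed.

Lemma sumJ J (f : nat -> nat -> \bar R) : (forall j n, 0 <= f j n) ->
  \sum_(j < J) lambda_phi phi (f j) <= lambda_phi phi (fun n => \sum_(j < J) f j n).
Proof.
move=> f0; elim: J => [|J IH]; first by rewrite big_ord0 lam_ge0.
have -> : (fun n => \sum_(j < J.+1) f j n) = (fun n => \sum_(j < J) f j n + f J n).
  by apply/funext => n; rewrite big_ord_recr.
rewrite big_ord_recr /=.
have S0 n : 0 <= \sum_(j < J) f j n by rewrite sume_ge0.
have T := two (fun n => \sum_(j < J) f j n) (f J) S0 (f0 J).
apply: le_trans T; exact: leeD2r.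
Qed.

End S.

Theorem proposition4p16 (R : realType) (phi : R -> R) :
  orlicz_function phi ->
  concave_on_nonneg phi ->
  sup_ratio_vanishes phi ->
  lattice_1_concave (lambda_phi phi) /\
  (forall (J : nat) (f : nat -> nat -> \bar R),
     (forall j n, (0 <= f j n)%E) ->
     (\sum_(j < J) lambda_phi phi (f j)
        <= lambda_phi phi (fun n => \sum_(j < J) f j n))%E).
Proof.
case=> phi0 _ _ mono _ conc _.
have H := @sumJ R phi phi0 mono conc.
split => //; exists 1%R => J f f0; rewrite mul1e; exact: H.
Qed.
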